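(* Let $\alpha$ be a positive irrational number and let $R,S$ be positive rational numbers with $\frac{R}{S}>\alpha$. Define the genitor $$g_\alpha(R,S)=\left\lfloor \frac{\alpha-\lfloor\alpha\rfloor}{R-\alpha S}\right\rfloor .$$ If $g_\alpha(R,S)$ is positive, then, writing $g=g_\alpha(R,S)$, $$\lfloor\alpha\rfloor < \frac{R g+\lfloor\alpha\rfloor}{S g+1} < \alpha < \frac{R (g+1)+\lfloor\alpha\rfloor}{S (g+1)+1}<\frac{R}{S}.$$
   Context: $\lfloor\cdot\rfloor$ denotes the floor function. *)

(* Defs.v *)
From Stdlib Require Import Reals QArith Lra Lia ZArith.
Open Scope R_scope.

(* Rfloorz x = floor x, the unique integer n with n <= x < n+1; [up x] is the unique integer
   with x < up x <= x + 1, so Rfloorz x = up x - 1. *)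
Definition Rfloorz (x : R) : Z := (up x - 1)%Z.

Definition is_rational (x : R) : Prop := exists q : Q, Q2R q = x.
Definition irrational (x : R) : Prop := ~ is_rational x.

Definition genitor (alpha r s : R) : Z :=
  Rfloorz ((alpha - IZR (Rfloorz alpha)) / (r - alpha * s)).

(* Main.v *)
Require Import Defs.
From Stdlib Require Import Reals ZArith QArith Qreals Lra.
Open Scope R_scope.

Lemma floor_spec (x : R) : IZR (Rfloorz x) <= x < IZR (Rfloorz x) + 1.
Proof.
  unfold Rfloorz. destruct (archimed x) as [H1 H2].
  rewrite minus_IZR. simpl. lra.
Qed.

Lemma Q2R_Z (z : Z) : Q2R (inject_Z z) = IZR z.
Proof. unfold Q2R, inject_Z. simpl. field. Qed.

Theorem proposition1 (alpha r s : R) :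
  0 < alpha -> irrational alpha ->
  is_rational r -> is_rational s -> 0 < r -> 0 < s ->
  r / s > alpha ->
  (0 < genitor alpha r s)%Z ->
  let g := IZR (genitor alpha r s) in
  let fa := IZR (Rfloorz alpha) in
  fa < (r * g + fa) / (s * g + 1) /\
  (r * g + fa) / (s * g + 1) < alpha /\
  alpha < (r * (g + 1) + fa) / (s * (g + 1) + 1) /\
  (r * (g + 1) + fa) / (s * (g + 1) + 1) < r / s.
Proof.
  intros Ha Hirr [qr Hr] [qs Hs] Hr0 Hs0 Hrs Hg g fa.
  assert (Hg0 : 0 < g) by (apply IZR_lt; exact Hg).
  destruct (floor_spec alpha) as [Fa1 Fa2]. fold fa in Fa1, Fa2.
  assert (HD : 0 < r - alpha * s).
  { assert (E : r = r / s * s) by (field; lra).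
    assert (r / s * s > alpha * s) by (apply Rmult_gt_compat_r; lra). lra. }
  pose (x := (alpha - fa) / (r - alpha * s)).
  destruct (floor_spec x) as [Fx1 Fx2].
  assert (Eg : IZR (Rfloorz x) = g) by reflexivity.
  rewrite Eg in Fx1, Fx2.
  assert (Hx : x * (r - alpha * s) = alpha - fa) by (unfold x; field; lra).
  assert (L1 : g * (r - alpha * s) <= alpha - fa).
  { rewrite <- Hx. apply Rmult_le_compat_r; lra. }
  assert (L2 : alpha - fa < (g + 1) * (r - alpha * s)).
  { rewrite <- Hx. apply Rmult_lt_compat_r; lra. }
  assert (L3 : g * (r - alpha * s) <> alpha - fa).
  { intro E. apply Hirr.
    exists ((inject_Z (genitor alpha r s) * qr + inject_Z (Rfloorz alpha))
            / (inject_Z (genitor alpha r s) * qs + 1))%Q.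
    assert (Hden : g * s + 1 <> 0) by nra.
    rewrite Q2R_div.
    - rewrite Q2R_plus, Q2R_plus, !Q2R_mult, !Q2R_Z, Hr, Hs. unfold Q2R at 1. simpl.
      fold g fa. apply (Rmult_eq_reg_r (g * s + 1)); [|exact Hden].
      field_simplify; try exact Hden. nra.
    - intro E2. apply Qeq_eqR in E2.
      rewrite Q2R_plus, Q2R_mult, Q2R_Z, Hs in E2. replace (Q2R 1) with 1 in E2 by (unfold Q2R; simpl; field). unfold Q2R in E2; simpl in E2.
      fold g in E2. apply Hden. rewrite E2. field. }
  assert (Hfs : fa * s < r).
  { assert (fa * s <= alpha * s) by (apply Rmult_le_compat_r; lra). lra. }
  assert (P1 : 0 < s * g + 1) by nra.
  assert (P2 : 0 < s * (g + 1) + 1) by nra.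
  repeat split.
  - apply Rmult_lt_reg_r with (s * g + 1); [lra|].
    unfold Rdiv; rewrite Rmult_assoc, Rinv_l; nra.
  - apply Rmult_lt_reg_r with (s * g + 1); [lra|].
    unfold Rdiv; rewrite Rmult_assoc, Rinv_l; [|lra].
    assert (g * (r - alpha * s) < alpha - fa) by lra. nra.
  - apply Rmult_lt_reg_r with (s * (g + 1) + 1); [lra|].
    unfold Rdiv; rewrite Rmult_assoc, Rinv_l; nra.
  - apply Rmult_lt_reg_r with (s * (s * (g + 1) + 1)); [nra|].
    replace ((r * (g + 1) + fa) / (s * (g + 1) + 1) * (s * (s * (g + 1) + 1)))
      with ((r * (g + 1) + fa) * s) by (field; lra).
    replace (r / s * (s * (s * (g + 1) + 1))) with (r * (s * (g + 1) + 1)) by (field; lra).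
    nra.
Qed.
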